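(* The functor $\sigma:\mathcal{T}_q\to\mathcal{S}_q$ is full: for every morphism $S=[V\xleftarrow{f}D\xrightarrow{g}W]$ of $\mathcal{S}_q$ there is $T\in\mathrm{Hom}_{\mathcal{T}_q}(V,W)$ with $\sigma(T)=S$.
   Context: All vector spaces over $\mathbb{F}_2$. $\mathcal{E}_q^{deg}$: objects finite-dimensional quadratic spaces (possibly degenerate), morphisms injective linear maps preserving quadratic forms; pullbacks are intersections of images with restricted form. $\mathrm{Sp}(\mathcal{E}_q^{deg})$: morphisms spans $[V\leftarrow D\rightarrow W]$ up to iso of $D$, composed by pullback; $\mathcal{S}_q$ is its full subcategory on non-degenerate spaces (polar form $q(x+y)+q(x)+q(y)$ with trivial radical). $\mathcal{E}_q$: full subcategory of $\mathcal{E}_q^{deg}$ on non-degenerate spaces. Pseudo push-out of $f:V\to W=f(V)\perp V'$ and $g:V\to X=g(V)\perp V''$: $V\perp V'\perp V''$ with maps $f(v)+v'\mapsto v+v'$, $g(v)+v''\mapsto v+v''$. $\mathcal{T}_q$: objects of $\mathcal{E}_q$; morphisms classes of cospans $[V\to X\leftarrow W]$ in $\mathcal{E}_q$ modulo the equivalence relation generated by existence of an $\mathcal{E}_q$-morphism between middle objects compatible with the legs; composition by pseudo push-out. $\sigma$ is the identity on objects and sends $[V\to X\leftarrow W]$ to $[V\leftarrow V\times_X W\rightarrow W]$. *)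

(* Defs.v *)
(* Quadratic spaces over F_2 in coordinates: a space of
   dimension n is 'rV['F_2]_n, linear maps are matrices acting on the right
   (x |-> x *m M). *)
From HB Require Import structures.
From mathcomp Require Import all_boot all_order all_algebra.
Set Implicit Arguments. Unset Strict Implicit. Unset Printing Implicit Defensive.
Import GRing.Theory.
Local Open Scope ring_scope.

Definition polar (n : nat) (q : 'rV['F_2]_n -> 'F_2) (x y : 'rV['F_2]_n) : 'F_2 :=
  q (x + y) + q x + q y.

(* q is a quadratic form: q(c x) = c^2 q(x) and its polar form is bilinear
   (it is symmetric by definition, so additivity in the first argument suffices). *)
Definition is_qform (n : nat) (q : 'rV['F_2]_n -> 'F_2) : Prop :=
  (forall (c : 'F_2) x, q (c *: x) = c ^+ 2 * q x) /\
  (forall x x' y, polar q (x + x') y = polar q x y + polar q x' y) /\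
  (forall (c : 'F_2) x y, polar q (c *: x) y = c * polar q x y).

Record qspace := QSpace {
  qdim : nat;
  qform : 'rV['F_2]_qdim -> 'F_2;
  qformP : is_qform qform }.
Arguments qform : clear implicits.

Definition nondeg (V : qspace) : Prop :=
  forall x, (forall y, polar (qform V) x y = 0) -> x = 0.

Definition qmor (V W : qspace) (M : 'M['F_2]_(qdim V, qdim W)) : Prop :=
  row_free M /\ forall x, qform W (x *m M) = qform V x.

(* The pullback V x_X W of a cospan V -a-> X <-b- W : the intersection of the
   images of a and b (given by a basis, the rows of pb_base), with the form
   restricted from X, and its legs to V and W (inverse images). *)
Definition pb_dim (n m k : nat) (a : 'M['F_2]_(n, k)) (b : 'M['F_2]_(m, k)) : nat :=
  \rank (a :&: b)%MS.
Definition pb_base (n m k : nat) (a : 'M['F_2]_(n, k)) (b : 'M['F_2]_(m, k))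
  : 'M['F_2]_(pb_dim a b, k) := row_base (a :&: b)%MS.
Definition pb_form (X : qspace) (n m : nat) (a : 'M['F_2]_(n, qdim X))
  (b : 'M['F_2]_(m, qdim X)) : 'rV['F_2]_(pb_dim a b) -> 'F_2 :=
  fun y => qform X (y *m pb_base a b).
Definition pb_left (n m k : nat) (a : 'M['F_2]_(n, k)) (b : 'M['F_2]_(m, k))
  : 'M['F_2]_(pb_dim a b, n) := pb_base a b *m pinvmx a.
Definition pb_right (n m k : nat) (a : 'M['F_2]_(n, k)) (b : 'M['F_2]_(m, k))
  : 'M['F_2]_(pb_dim a b, m) := pb_base a b *m pinvmx b.

(* Isomorphism of spans [V <-f- D -g-> W] and [V <-p1- P -p2-> W], where P is
   given by its dimension r and form qP: a bijective form-preserving linear map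
   h : D -> P commuting with the legs. *)
Definition span_iso (D : qspace) (n m : nat)
  (f : 'M['F_2]_(qdim D, n)) (g : 'M['F_2]_(qdim D, m))
  (r : nat) (qP : 'rV['F_2]_r -> 'F_2) (p1 : 'M['F_2]_(r, n)) (p2 : 'M['F_2]_(r, m))
  : Prop :=
  exists h : 'M['F_2]_(qdim D, r),
    [/\ row_free h, row_full h, (forall y, qP (y *m h) = qform D y),
        h *m p1 = f & h *m p2 = g].

(* sigma([V -a-> X <-b- W]) is isomorphic (as a span) to [V <-f- D -g-> W] *)
Definition sigma_is (V W X : qspace) (a : 'M['F_2]_(qdim V, qdim X))
  (b : 'M['F_2]_(qdim W, qdim X)) (D : qspace)
  (f : 'M['F_2]_(qdim D, qdim V)) (g : 'M['F_2]_(qdim D, qdim W)) : Prop :=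
  span_iso f g (@pb_form X _ _ a b) (pb_left a b) (pb_right a b).

(* Main.v *)
Require Import Defs.
From mathcomp Require Import all_boot all_order all_algebra ring.
Set Implicit Arguments. Unset Strict Implicit. Unset Printing Implicit Defensive.
Import GRing.Theory.
Local Open Scope ring_scope.

Lemma F2_xx (x : 'F_2) : x + x = 0.
Proof. rewrite -mulr2n -mulr_natr. have -> : (2%:R : 'F_2) = 0 by apply/val_inj. by rewrite mulr0. Qed.
Lemma F2_abb (a b : 'F_2) : a + b + b = a.
Proof. by rewrite -addrA F2_xx addr0. Qed.

Section Q.
Variables (n : nat) (q : 'rV['F_2]_n -> 'F_2).
Hypothesis hq : is_qform q.

Lemma polarC x y : polar q x y = polar q y x.
Proof. rewrite /polar [y + x]addrC; ring. Qed.
Lemma polarDl x x' y : polar q (x + x') y = polar q x y + polar q x' y.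
Proof. by case: hq => _ []. Qed.
Lemma polarZl c x y : polar q (c *: x) y = c * polar q x y.
Proof. by case: hq => _ []. Qed.
Lemma polarDr x y y' : polar q x (y + y') = polar q x y + polar q x y'.
Proof. by rewrite polarC polarDl (polarC y) (polarC y'). Qed.
Lemma polarZr c x y : polar q x (c *: y) = c * polar q x y.
Proof. by rewrite polarC polarZl polarC. Qed.
Lemma polar0l y : polar q 0 y = 0.
Proof. by rewrite -(scale0r 0) polarZl mul0r. Qed.
Lemma polar0r y : polar q y 0 = 0.
Proof. by rewrite polarC polar0l. Qed.
Lemma q0 : q 0 = 0.
Proof. case: hq => h _; by rewrite -(scale0r 0) h expr2 !mul0r. Qed.
Lemma qD x y : q (x + y) = q x + q y + polar q x y.
Proof.
rewrite /polar; move: (q x) (q y) (q (x + y)) => a b c. have -> : a + b + (c + a + b) = c + a + a + b + b by ring. by rewrite !F2_abb.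
Qed.
End Q.

Definition bilin (k : nat) (beta : 'rV['F_2]_k -> 'rV['F_2]_k -> 'F_2) :=
  (forall x x' y, beta (x + x') y = beta x y + beta x' y) /\
  (forall x y y', beta x (y + y') = beta x y + beta x y') /\
  (forall c x y, beta (c *: x) y = c * beta x y) /\
  (forall c x y, beta x (c *: y) = c * beta x y).

Lemma polar_bil k (beta : 'rV['F_2]_k -> 'rV['F_2]_k -> 'F_2) x y :
  bilin beta -> polar (fun x => beta x x) x y = beta x y + beta y x.
Proof.
case=> Dl [Dr _]; rewrite /polar !(Dl, Dr).
rewrite (_ : _ + _ + _ = beta x y + beta y x + beta x x + beta x x + beta y y + beta y y); last ring.
by rewrite !F2_abb.
Qed.

Lemma qform_bil k (beta : 'rV['F_2]_k -> 'rV['F_2]_k -> 'F_2) :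
  bilin beta -> is_qform (fun x => beta x x).
Proof.
move=> hb; have [Dl [Dr [Zl Zr]]] := hb; split; [|split].
- by move=> c x; rewrite Zl Zr mulrA expr2.
- by move=> x x' y; rewrite !polar_bil // Dl Dr; ring.
- by move=> c x y; rewrite !polar_bil // Zl Zr; ring.
Qed.

Lemma qform_add k (q1 q2 : 'rV['F_2]_k -> 'F_2) :
  is_qform q1 -> is_qform q2 -> is_qform (fun x => q1 x + q2 x).
Proof.
move=> [S1 [D1 Z1]] [S2 [D2 Z2]].
have P x y : polar (fun x => q1 x + q2 x) x y = polar q1 x y + polar q2 x y.
  rewrite /polar; ring.
split; [|split].
- by move=> c x; rewrite S1 S2 mulrDr.
- by move=> x x' y; rewrite !P D1 D2; ring.
- by move=> c x y; rewrite !P Z1 Z2; ring.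
Qed.

Lemma polar_comp k l (q : 'rV['F_2]_l -> 'F_2) (M : 'M['F_2]_(k, l)) x y :
  polar (fun x => q (x *m M)) x y = polar q (x *m M) (y *m M).
Proof. by rewrite /polar mulmxDl. Qed.

Lemma qform_comp k l (q : 'rV['F_2]_l -> 'F_2) (M : 'M['F_2]_(k, l)) :
  is_qform q -> is_qform (fun x => q (x *m M)).
Proof.
move=> hq; split; [|split].
- by move=> c x; rewrite -scalemxAl; case: hq => ->.
- by move=> x x' y; rewrite !polar_comp mulmxDl polarDl.
- by move=> c x y; rewrite !polar_comp -scalemxAl polarZl.
Qed.

Definition dotv (p : nat) (x y : 'rV['F_2]_p) : 'F_2 := (x *m y^T) 0 0.

Lemma bilin_dot k p (A B : 'M['F_2]_(k, p)) :
  bilin (fun x y => dotv (x *m A) (y *m B)).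
Proof.
rewrite /dotv; split; [|split; [|split]].
- by move=> x x' y; rewrite mulmxDl mulmxDl mxE.
- by move=> x y y'; rewrite mulmxDl linearD mulmxDr mxE.
- by move=> c x y; rewrite -scalemxAl -scalemxAl mxE.
- by move=> c x y; rewrite -scalemxAl linearZ -scalemxAr mxE.
Qed.

Lemma bilin_polar k l (q : 'rV['F_2]_l -> 'F_2) (M N : 'M['F_2]_(k, l)) :
  is_qform q -> bilin (fun x y => polar q (x *m M) (y *m N)).
Proof.
move=> hq; split; [|split; [|split]].
- by move=> x x' y; rewrite mulmxDl polarDl.
- by move=> x y y'; rewrite mulmxDl polarDr.
- by move=> c x y; rewrite -scalemxAl polarZl.
- by move=> c x y; rewrite -scalemxAl polarZr.
Qed.

Lemma polar_add k (q1 q2 : 'rV['F_2]_k -> 'F_2) x y :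
  polar (fun x => q1 x + q2 x) x y = polar q1 x y + polar q2 x y.
Proof. rewrite /polar; ring. Qed.

Lemma dotvC p (x y : 'rV['F_2]_p) : dotv x y = dotv y x.
Proof. rewrite /dotv; have -> : y *m x^T = (x *m y^T)^T by rewrite trmx_mul trmxK. by rewrite [RHS]mxE. Qed.
Lemma dotv0r p (x : 'rV['F_2]_p) : dotv x 0 = 0.
Proof. by rewrite /dotv linear0 mulmx0 mxE. Qed.
Lemma dotv0l p (x : 'rV['F_2]_p) : dotv 0 x = 0.
Proof. by rewrite /dotv mul0mx mxE. Qed.
Lemma dotv_nondeg p (x : 'rV['F_2]_p) : (forall eta, dotv x eta = 0) -> x = 0.
Proof.
move=> H; apply/rowP => i; rewrite mxE.
have := H (delta_mx 0 i); rewrite /dotv trmx_delta -colE mxE.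
by [].
Qed.

Section Constr.
Variables (V W D : qspace) (f : 'M['F_2]_(qdim D, qdim V)) (g : 'M['F_2]_(qdim D, qdim W)).
Hypotheses (hf : qmor f) (hg : qmor g).
Local Notation n := (qdim V).
Local Notation m := (qdim W).
Local Notation p := (m + n)%N.
Definition NN := (p + p)%N.
Definition Pw : 'M['F_2]_(NN, m) := col_mx (col_mx 1%:M 0) 0.
Definition Pu : 'M['F_2]_(NN, n) := col_mx (col_mx 0 1%:M) 0.
Definition Px : 'M['F_2]_(NN, p) := col_mx 1%:M 0.
Definition Pxi : 'M['F_2]_(NN, p) := col_mx 0 1%:M.
Definition QF : 'M['F_2]_(m, n) := pinvmx g *m f.
Definition qX (z : 'rV['F_2]_NN) : 'F_2 :=
  qform W (z *m Pw) + qform V (z *m Pu) + polar (qform V) (z *m (Pw *m QF)) (z *m Pu)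
  + dotv (z *m Px) (z *m Pxi).

Lemma qX_is : is_qform qX.
Proof.
have hV := qformP V; have hW := qformP W.
apply: qform_add; last exact: (qform_bil (bilin_dot Px Pxi)).
apply: qform_add; last exact: (qform_bil (bilin_polar _ _ hV)).
by apply: qform_add; apply: qform_comp.
Qed.

Definition XX := QSpace qX_is.

Lemma polar_qX z y : polar qX z y =
  polar (qform W) (z *m Pw) (y *m Pw) + polar (qform V) (z *m Pu) (y *m Pu)
  + (polar (qform V) (z *m (Pw *m QF)) (y *m Pu) + polar (qform V) (y *m (Pw *m QF)) (z *m Pu))
  + (dotv (z *m Px) (y *m Pxi) + dotv (y *m Px) (z *m Pxi)).
Proof.
have E1 := polar_bil z y (bilin_polar (Pw *m QF) Pu (qformP V)); cbv beta in E1.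
have E2 := polar_bil z y (bilin_dot Px Pxi); cbv beta in E2.
rewrite /qX polar_add E2 polar_add E1 polar_add !polar_comp.
by [].
Qed.

Definition Exi : 'M['F_2]_(p, NN) := row_mx 0 1%:M.
Definition Ex : 'M['F_2]_(p, NN) := row_mx 1%:M 0.
Lemma ExiPw : Exi *m Pw = 0. Proof. by rewrite mul_row_col !mul0mx mulmx0 addr0. Qed.
Lemma ExiPu : Exi *m Pu = 0. Proof. by rewrite mul_row_col !mul0mx mulmx0 addr0. Qed.
Lemma ExiPx : Exi *m Px = 0. Proof. by rewrite mul_row_col !mul0mx mulmx0 addr0. Qed.
Lemma ExiPxi : Exi *m Pxi = 1%:M. Proof. by rewrite mul_row_col !mul0mx mulmx1 add0r. Qed.
Lemma ExPx : Ex *m Px = 1%:M. Proof. by rewrite mul_row_col !mul0mx mulmx1 addr0. Qed.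
Lemma ExPxi : Ex *m Pxi = 0. Proof. by rewrite mul_row_col !mul0mx mulmx0 addr0. Qed.

Lemma XX_nondeg : nondeg XX.
Proof.
move=> z /= H.
have hV := qformP V; have hW := qformP W.
have zPx : z *m Px = 0.
  apply: dotv_nondeg => eta; have := H (eta *m Exi).
  rewrite polar_qX -!mulmxA ExiPw ExiPu ExiPx ExiPxi (mulmxA Exi) ExiPw !mulmx0 !mul0mx.
  by rewrite !mulmx0 !(polar0l hV, polar0r hV, polar0r hW, dotv0l) mulmx1 !add0r addr0.
have hPw : Pw = Px *m col_mx 1%:M 0 by rewrite mul_col_mx mul1mx mul0mx.
have hPu : Pu = Px *m col_mx 0 1%:M by rewrite mul_col_mx mul1mx mul0mx.
have zPw : z *m Pw = 0 by rewrite hPw mulmxA zPx mul0mx.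
have zPu : z *m Pu = 0 by rewrite hPu mulmxA zPx mul0mx.
have zPxi : z *m Pxi = 0.
  apply: dotv_nondeg => eta; have := H (eta *m Ex).
  rewrite polar_qX (mulmxA z Pw) zPw zPu zPx mul0mx.
  rewrite -!mulmxA ExPx ExPxi mulmx1 mulmx0.
  by rewrite !(polar0l hV, polar0r hV, polar0l hW, dotv0l, dotv0r) !add0r dotvC.
have hl : lsubmx z = z *m Px by rewrite -{2}[z]hsubmxK mul_row_col mulmx1 mulmx0 addr0.
have hr : rsubmx z = z *m Pxi by rewrite -{2}[z]hsubmxK mul_row_col mulmx1 mulmx0 add0r.
by rewrite -[z]hsubmxK hl hr zPx zPxi row_mx0.
Qed.

Definition aa : 'M['F_2]_(n, NN) := row_mx (row_mx (pinvmx f *m g) (1%:M - pinvmx f *m f)) 0.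
Definition bb : 'M['F_2]_(m, NN) := row_mx (row_mx 1%:M 0) 0.

Lemma aPw : aa *m Pw = pinvmx f *m g.
Proof. by rewrite !mul_row_col !(mulmx0, mul0mx, mulmx1, addr0, add0r). Qed.
Lemma aPu : aa *m Pu = 1%:M - pinvmx f *m f.
Proof. by rewrite !mul_row_col !(mulmx0, mul0mx, mulmx1, addr0, add0r). Qed.
Lemma aPxi : aa *m Pxi = 0.
Proof. by rewrite !mul_row_col !(mulmx0, mul0mx, mulmx1, addr0, add0r). Qed.
Lemma bPw : bb *m Pw = 1%:M.
Proof. by rewrite !mul_row_col !(mulmx0, mul0mx, mulmx1, addr0, add0r). Qed.
Lemma bPu : bb *m Pu = 0.
Proof. by rewrite !mul_row_col !(mulmx0, mul0mx, mulmx1, addr0, add0r). Qed.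
Lemma bPxi : bb *m Pxi = 0.
Proof. by rewrite !mul_row_col !(mulmx0, mul0mx, mulmx1, addr0, add0r). Qed.

Lemma gQ : g *m pinvmx g = 1%:M.
Proof. by apply: mulmxVp; case: hg. Qed.
Lemma fP : f *m pinvmx f = 1%:M.
Proof. by apply: mulmxVp; case: hf. Qed.

Lemma aa_qmor : @qmor V XX aa.
Proof.
have hV := qformP V.
split.
  apply/inj_row_free => x hx.
  have h1 : x *m pinvmx f = 0.
    apply: (row_free_inj hg.1); rewrite mul0mx -mulmxA -aPw mulmxA hx mul0mx //.
  have := congr1 (mulmx^~ Pu) hx; rewrite /= -mulmxA aPu mulmxBr mulmx1 mulmxA h1 mul0mx subr0.
  by rewrite mul0mx.
move=> x /=; rewrite /qX -!mulmxA aPw aPu aPxi mulmx0 dotv0r addr0.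
rewrite (mulmxA aa) aPw /QF -[pinvmx f *m g *m _]mulmxA (mulmxA g) gQ mul1mx (mulmxA x (pinvmx f) g) (mulmxA x (pinvmx f) f).
case: hg => _ ->; case: hf => _ <-.
rewrite mulmxBr mulmx1 (mulmxA x (pinvmx f) f) -qD.
by rewrite addrC subrK.
Qed.

Lemma bb_qmor : @qmor W XX bb.
Proof.
have hV := qformP V.
split.
  apply/inj_row_free => x hx.
  by have := congr1 (mulmx^~ Pw) hx; rewrite /= -mulmxA bPw mulmx1 mul0mx.
move=> x /=; rewrite /qX -!mulmxA bPw bPu bPxi !mulmx0 mulmx1 dotv0r polar0r // q0 //.
by rewrite !addr0.
Qed.

Lemma fa_gb : f *m aa = g *m bb.
Proof.
rewrite !mul_mx_row !mulmx0 mulmxBr mulmx1 !(mulmxA f (pinvmx f)) fP !mul1mx mulmx1 subrr.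
by []. Qed.

Lemma cap_eq : (f *m aa :=: aa :&: bb)%MS.
Proof.
apply/eqmxP/andP; split.
  by rewrite sub_capmx submxMl fa_gb submxMl.
have /submxP [X1 hX1] := capmxSl aa bb.
have /submxP [Y1 hY1] := capmxSr aa bb.
have hu := congr1 (mulmx^~ Pu) (etrans (esym hX1) hY1).
rewrite /= -!mulmxA aPu bPu mulmx0 mulmxBr mulmx1 in hu.
have e : X1 = X1 *m pinvmx f *m f by rewrite -mulmxA; apply/eqP; rewrite -subr_eq0 hu.
by rewrite hX1 e -(mulmxA (X1 *m pinvmx f) f aa) submxMl.
Qed.
End Constr.

Theorem proposition4p20 (V W D : qspace)
  (f : 'M['F_2]_(qdim D, qdim V)) (g : 'M['F_2]_(qdim D, qdim W)) :
  nondeg V -> nondeg W -> qmor f -> qmor g ->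
  exists X : qspace, nondeg X /\
    exists (a : 'M['F_2]_(qdim V, qdim X)) (b : 'M['F_2]_(qdim W, qdim X)),
      [/\ qmor a, qmor b & sigma_is a b f g].
Proof.
move=> _ _ hf hg.
exists (XX f g); split; first exact: XX_nondeg.
exists (aa f g), (bb V W); split.
- exact: aa_qmor.
- exact: (bb_qmor f g).
set a := aa f g; set b := bb V W.
have ha : @qmor V (XX f g) a := aa_qmor hf hg.
have hb : @qmor W (XX f g) b := bb_qmor f g.
have hE := cap_eq g hf.
have hEB : (f *m a <= pb_base a b)%MS by rewrite /pb_base eq_row_base -hE.
pose h := (f *m a) *m pinvmx (pb_base a b).
have hB : h *m pb_base a b = f *m a by rewrite /h mulmxKpV.
have rE : \rank (f *m a) = qdim D.
  by rewrite mxrankMfree ?ha.1 //; apply/eqP; case: hf.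
have rh : \rank h = qdim D.
  apply/eqP; rewrite eqn_leq rank_leq_row /= -{1}rE -hB.
  exact: mxrankM_maxl.
have e : pb_dim a b = qdim D by rewrite /pb_dim -hE rE.
exists h; split.
- by rewrite /row_free rh.
- by rewrite /row_full rh e.
- move=> y; rewrite /pb_form -mulmxA hB mulmxA.
  by case: ha => _ ->; case: hf => _ ->.
- by rewrite /pb_left mulmxA hB mulmxKp //; case: ha.
- by rewrite /pb_right mulmxA hB (fa_gb g hf) mulmxKp //; case: hb.
Qed.
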